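(* Let $\mathcal H_1,\dots,\mathcal H_9,\mathcal H_E$ be finite-dimensional complex Hilbert spaces and $|\psi\rangle\in\mathcal H_1\otimes\cdots\otimes\mathcal H_9\otimes\mathcal H_E$. For each $k\in[9]$ let $X_k,Z_k$ be Hermitian operators on $\mathcal H_k$ (extended by the identity to the whole space). Define $\tilde S_1=Z_1Z_2$, $\tilde S_2=Z_1Z_3$, $\tilde S_3=Z_4Z_5$, $\tilde S_4=Z_4Z_6$, $\tilde S_5=Z_7Z_8$, $\tilde S_6=Z_7Z_9$, $\tilde S_7=X_1X_2X_3X_4X_5X_6$, $\tilde S_8=X_1X_2X_3X_7X_8X_9$, $\tilde S_9=X_4X_5X_6X_7X_8X_9$. Assume (i) $X_kZ_k+Z_kX_k=0$ for $k\in\{1,4,7\}$; (ii) $\tilde S_k|\psi\rangle=|\psi\rangle$ for all $k\in[9]$; (iii) $X_k^2=Z_k^2=I$ for $k\in\{2,3,5,6,8,9\}$. Then for every $k\in[9]$: $X_k^2|\psi\rangle=Z_k^2|\psi\rangle=|\psi\rangle$ and $(X_kZ_k+Z_kX_k)|\psi\rangle=0$.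
   Context: Operators acting on different tensor factors commute. *)

(* Defs.v *)
From HB Require Import structures.
From mathcomp Require Import all_boot all_order all_algebra.
Set Implicit Arguments. Unset Strict Implicit. Unset Printing Implicit Defensive.
Import Order.TTheory GRing.Theory Num.Theory.
Local Open Scope ring_scope.

(* Factors 1..9 are indexed by k : 'I_9 (factor n is [fac n] = k with val k = n-1);
   factor k has dimension d k, the environment E has dimension dE.
   Each H_k is identified with C^(d k) via an orthonormal basis, so the
   computational basis of H_1 (x) ... (x) H_9 (x) H_E is indexed by Idx d dE. *)
Definition Idx (d : 'I_9 -> nat) (dE : nat) : Type :=
  ({dffun forall k : 'I_9, 'I_(d k)} * 'I_dE)%type.

Definition vec (C : nzRingType) (d : 'I_9 -> nat) (dE : nat) := {ffun Idx d dE -> C}.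

Definition upd (d : 'I_9 -> nat) (dE : nat) (i : Idx d dE) (k : 'I_9) (j : 'I_(d k))
  : Idx d dE := (finfun (dfwith i.1 j), i.2).

(* ext k M = M acting on factor k, tensored with the identity on all other factors *)
Definition ext (C : nzRingType) (d : 'I_9 -> nat) (dE : nat) (k : 'I_9)
  (M : 'M[C]_(d k)) (v : vec C d dE) : vec C d dE :=
  [ffun i : Idx d dE => \sum_(j < d k) M (i.1 k) j * v (@upd d dE i k j)].

Definition herm_mx (C : numClosedFieldType) (n : nat) (M : 'M[C]_n) : Prop :=
  forall i j, M j i = Num.conj (M i j).

Definition fac (n : nat) : 'I_9 := inord n.-1.

(* Main.v *)
Require Import Defs.
From HB Require Import structures.
From mathcomp Require Import all_boot all_order all_algebra.
Import GRing.Theory Num.Theory.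
Local Open Scope ring_scope.

Lemma upd1 {d dE} (i : Idx d dE) k j : (@upd _ _ i k j).1 k = j.
Proof. by rewrite /upd /= ffunE dfwith_in. Qed.
Lemma updN {d dE} (i : Idx d dE) k l j : k != l -> (@upd _ _ i k j).1 l = i.1 l.
Proof. by move=> H; rewrite /upd /= ffunE dfwith_out. Qed.
Lemma upd2 {d dE} (i : Idx d dE) k j : (@upd _ _ i k j).2 = i.2.
Proof. by []. Qed.
Lemma idxP {d dE} (i i' : Idx d dE) :
  (forall l, i.1 l = i'.1 l) -> i.2 = i'.2 -> i = i'.
Proof. by case: i i' => [f e] [f' e'] /= H ->; congr pair; apply/ffunP. Qed.
Lemma upd_id {d dE} (i : Idx d dE) k : @upd _ _ i k (i.1 k) = i.
Proof.
apply: idxP => // l; case: (eqVneq k l) => [<-|ne]; first by rewrite upd1.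
by rewrite updN.
Qed.
Lemma upd_upd {d dE} (i : Idx d dE) k j j' : @upd _ _ (@upd _ _ i k j) k j' = @upd _ _ i k j'.
Proof.
apply: idxP => // l; case: (eqVneq k l) => [<-|ne]; first by rewrite !upd1.
by rewrite !updN.
Qed.
Lemma upd_comm {d dE} (i : Idx d dE) k l j j' : k != l ->
  @upd _ _ (@upd _ _ i k j) l j' = @upd _ _ (@upd _ _ i l j') k j.
Proof.
move=> kl; apply: idxP => // m; case: (eqVneq k m) => [<-|km].
  by rewrite updN 1?eq_sym // !upd1.
case: (eqVneq l m) => [<-|lm]; first by rewrite upd1 updN // upd1.
by rewrite !updN.
Qed.

Section E.
End E.

Lemma ext_mul (C : numClosedFieldType) d dE k (M N : 'M[C]_(d k)) (v : vec C d dE) :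
  @ext _ _ _ k M (@ext _ _ _ k N v) = @ext _ _ _ k (M *m N) v.
Proof.
apply/ffunP => i; rewrite !ffunE.
under eq_bigr => j _ do rewrite ffunE upd1 big_distrr /=.
rewrite exchange_big /=; apply: eq_bigr => j' _.
rewrite mxE big_distrl /=; apply: eq_bigr => j _.
by rewrite upd_upd mulrA.
Qed.

Lemma ext_1 (C : numClosedFieldType) d dE k (v : vec C d dE) :
  @ext _ _ _ k 1%:M v = v.
Proof.
apply/ffunP => i; rewrite !ffunE (bigD1 (i.1 k)) //= big1 ?addr0.
  by rewrite mxE eqxx mulr1n mul1r upd_id.
by move=> j ne; rewrite mxE eq_sym (negbTE ne) mulr0n mul0r.
Qed.

Lemma ext_add (C : numClosedFieldType) d dE k (M N : 'M[C]_(d k)) (v : vec C d dE) :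
  @ext _ _ _ k (M + N) v = @ext _ _ _ k M v + @ext _ _ _ k N v.
Proof.
apply/ffunP => i; rewrite !ffunE -big_split /=; apply: eq_bigr => j _.
by rewrite mxE mulrDl.
Qed.

Lemma ext0 (C : numClosedFieldType) d dE k (v : vec C d dE) :
  @ext _ _ _ k (0 : 'M[C]_(d k)) v = 0.
Proof.
by apply/ffunP => i; rewrite !ffunE big1 // => j _; rewrite mxE mul0r.
Qed.

Lemma ext_opp (C : numClosedFieldType) d dE k (M : 'M[C]_(d k)) (v : vec C d dE) :
  @ext _ _ _ k M (- v) = - @ext _ _ _ k M v.
Proof.
apply/ffunP => i; rewrite !ffunE -sumrN; apply: eq_bigr => j _.
by rewrite ffunE mulrN.
Qed.

Lemma ext_sub (C : numClosedFieldType) d dE k (M : 'M[C]_(d k)) (u v : vec C d dE) :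
  @ext _ _ _ k M (u - v) = @ext _ _ _ k M u - @ext _ _ _ k M v.
Proof.
apply/ffunP => i; rewrite !ffunE -sumrB; apply: eq_bigr => j _.
by rewrite !ffunE mulrBr.
Qed.

Lemma ext_swap (C : numClosedFieldType) d dE k l (M : 'M[C]_(d k)) (N : 'M[C]_(d l))
  (v : vec C d dE) : (l < k)%N ->
  @ext _ _ _ k M (@ext _ _ _ l N v) = @ext _ _ _ l N (@ext _ _ _ k M v).
Proof.
move=> lk; have kl : k != l by rewrite neq_ltn lk orbT.
apply/ffunP => i; rewrite !ffunE.
under eq_bigr => j _ do rewrite ffunE updN // big_distrr /=.
under [RHS]eq_bigr => j _ do rewrite ffunE updN 1?eq_sym // big_distrr /=.
rewrite exchange_big /=; apply: eq_bigr => j' _; apply: eq_bigr => j _.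
by rewrite upd_comm // mulrCA.
Qed.

Definition rel {d dE} (k : 'I_9) (i i' : Idx d dE) : bool :=
  i' == @upd _ _ i k (i'.1 k).

Lemma relC {d dE} k (i i' : Idx d dE) : rel k i i' = rel k i' i.
Proof.
suff H : forall a b : Idx d dE, rel k a b -> rel k b a.
  by apply/idP/idP => /H.
move=> a b /eqP E; apply/eqP.
by rewrite E upd_upd upd_id.
Qed.

Lemma sum_upd (C : numClosedFieldType) d dE k (G : Idx d dE -> C) (i : Idx d dE) :
  \sum_(j < d k) G (@upd _ _ i k j) = \sum_i' (rel k i i')%:R * G i'.
Proof.
have E : forall j : 'I_(d k), G (@upd _ _ i k j) =
    \sum_i' (i' == @upd _ _ i k j)%:R * G i'.
  move=> j; rewrite (bigD1 (@upd _ _ i k j)) //= eqxx mul1r big1 ?addr0 //.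
  by move=> i' /negbTE ->; rewrite mul0r.
under eq_bigr => j _ do rewrite E.
rewrite exchange_big /=; apply: eq_bigr => i' _; rewrite -big_distrl /=.
congr (_ * _).
have F : forall j : 'I_(d k), (i' == @upd _ _ i k j) = (j == i'.1 k) && rel k i i'.
  move=> j; apply/idP/idP.
    by move/eqP=> ->; rewrite /rel !upd1 !eqxx.
  by case/andP => /eqP -> .
under eq_bigr => j _ do rewrite F.
rewrite (bigD1 (i'.1 k)) //= eqxx /= big1 ?addr0 //.
by move=> j /negbTE ->.
Qed.

Lemma sum_swap (C : numClosedFieldType) d dE k (F : Idx d dE -> Idx d dE -> C) :
  \sum_i \sum_(j < d k) F i (@upd _ _ i k j) =
  \sum_i \sum_(j < d k) F (@upd _ _ i k j) i.
Proof.
under eq_bigr => i _ do rewrite (@sum_upd _ _ _ k (F i)).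
under [RHS]eq_bigr => i _ do rewrite (@sum_upd _ _ _ k (F^~ i)).
rewrite exchange_big /=; apply: eq_bigr => i _; apply: eq_bigr => i' _.
by rewrite relC.
Qed.

Definition dot {C : numClosedFieldType} {d dE} (u v : vec C d dE) : C :=
  \sum_i (u i)^* * v i.

Lemma dot_ext (C : numClosedFieldType) d dE k (M : 'M[C]_(d k)) (u v : vec C d dE) :
  herm_mx M -> dot u (@ext _ _ _ k M v) = dot (@ext _ _ _ k M u) v.
Proof.
move=> hM; rewrite /dot.
under eq_bigr => i _ do rewrite ffunE big_distrr /=.
under [RHS]eq_bigr => i _ do rewrite ffunE rmorph_sum big_distrl /=.
pose F := fun a b : Idx d dE => (u a)^* * M (a.1 k) (b.1 k) * v b.
transitivity (\sum_i \sum_(j < d k) F i (@upd _ _ i k j)).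
  by apply: eq_bigr => i _; apply: eq_bigr => j _; rewrite /F upd1 mulrA.
rewrite sum_swap; apply: eq_bigr => i _; apply: eq_bigr => j _.
by rewrite /F upd1 rmorphM /= (hM (i.1 k) j) [_ * (u _)^*]mulrC.
Qed.

Lemma dot_ge0 (C : numClosedFieldType) d dE (v : vec C d dE) : 0 <= dot v v.
Proof.
by apply: sumr_ge0 => i _; rewrite -normCKC exprn_ge0.
Qed.

Lemma dot_eq0 (C : numClosedFieldType) d dE (v : vec C d dE) : dot v v = 0 -> v = 0.
Proof.
move=> H; apply/ffunP => i; rewrite ffunE.
have nn : forall i, predT i -> 0 <= (v i)^* * v i.
  by move=> j _; rewrite -normCKC exprn_ge0.
have := psumr_eq0P nn H (i:=i) isT.
by move/eqP; rewrite -normCKC sqrf_eq0 normr_eq0 => /eqP.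
Qed.

Lemma dot_oppr (C : numClosedFieldType) d dE (u v : vec C d dE) : dot u (- v) = - dot u v.
Proof. by rewrite /dot -sumrN; apply: eq_bigr => i _; rewrite ffunE mulrN. Qed.

Lemma pos_sq (C : numClosedFieldType) d dE k (M : 'M[C]_(d k)) (psi : vec C d dE) :
  herm_mx M ->
  @ext _ _ _ k M (@ext _ _ _ k M (@ext _ _ _ k M (@ext _ _ _ k M psi))) = psi ->
  @ext _ _ _ k M (@ext _ _ _ k M psi) = psi.
Proof.
move=> hM H.
pose P := fun w : vec C d dE => @ext _ _ _ k M (@ext _ _ _ k M w).
set v := P psi - psi.
have Pv : P v = - v by rewrite /v /P !ext_sub H opprB.
have E : dot (@ext _ _ _ k M v) (@ext _ _ _ k M v) + dot v v = 0.
  by rewrite -dot_ext // -/(P v) Pv dot_oppr addNr.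
move/eqP: E; rewrite paddr_eq0 ?dot_ge0 // => /andP [_ /eqP /dot_eq0].
by move/eqP; rewrite subr_eq0 => /eqP.
Qed.

Lemma sq_ext (C : numClosedFieldType) d dE k (M : 'M[C]_(d k)) (v : vec C d dE) :
  M *m M = 1%:M -> @ext _ _ _ k M (@ext _ _ _ k M v) = v.
Proof. by move=> H; rewrite ext_mul H ext_1. Qed.

Lemma anti_ext (C : numClosedFieldType) d dE k (M N : 'M[C]_(d k)) (v : vec C d dE) :
  M *m N + N *m M = 0 ->
  @ext _ _ _ k N (@ext _ _ _ k M v) = - @ext _ _ _ k M (@ext _ _ _ k N v).
Proof.
move=> H; apply/eqP; rewrite -addr_eq0 addrC !ext_mul -ext_add H.
by rewrite ext0.
Qed.

Lemma ext_swapN (C : numClosedFieldType) d dE k l (M : 'M[C]_(d k)) (N : 'M[C]_(d l))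
  (v : vec C d dE) : k != l ->
  @ext _ _ _ k M (@ext _ _ _ l N v) = @ext _ _ _ l N (@ext _ _ _ k M v).
Proof.
rewrite neq_ltn => /orP [kl|lk]; last exact: ext_swap.
by rewrite [RHS]ext_swap.
Qed.

Ltac sortI XX ZZ sXX sZZ :=
  repeat match goal with
  | |- context [XX ?k (XX ?l ?v)] =>
      let H := fresh "H" in
      (have H : (l < k)%N by rewrite /fac !inordK);
      rewrite (sXX k l v H); clear H
  | |- context [ZZ ?k (ZZ ?l ?v)] =>
      let H := fresh "H" in
      (have H : (l < k)%N by rewrite /fac !inordK);
      rewrite (sZZ k l v H); clear H
  end.

Ltac zin XX ZZ sZX :=
  repeat match goal with
  | |- context [ZZ ?k (XX ?l ?v)] =>
      let H := fresh "H" in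
      (have H : k != l by rewrite /fac -val_eqE /= !inordK);
      rewrite (sZX k l v H); clear H
  end.

Ltac zout XX ZZ sXZ :=
  repeat match goal with
  | |- context [XX ?k (ZZ ?l ?v)] =>
      let H := fresh "H" in
      (have H : k != l by rewrite /fac -val_eqE /= !inordK);
      rewrite (sXZ k l v H); clear H
  end.

Ltac nf XX ZZ sZX oXX oZZ ant1 ant4 ant7 :=
  do 12 try (zin XX ZZ sZX; rewrite ?ant1 ?ant4 ?ant7 ?oXX ?oZZ).

Theorem mainTheorem4 (C : numClosedFieldType) (d : 'I_9 -> nat) (dE : nat)
  (X Z : forall k : 'I_9, 'M[C]_(d k)) (psi : vec C d dE) :
  (forall k : 'I_9, herm_mx (X k) /\ herm_mx (Z k)) ->
  let XX := fun k : 'I_9 => @ext C d dE k (X k) in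
  let ZZ := fun k : 'I_9 => @ext C d dE k (Z k) in
  (* (i) *)
  (forall k : 'I_9, k \in [:: fac 1; fac 4; fac 7] ->
     X k *m Z k + Z k *m X k = 0) ->
  (* (ii) stabilizer conditions *)
  ZZ (fac 1) (ZZ (fac 2) psi) = psi ->
  ZZ (fac 1) (ZZ (fac 3) psi) = psi ->
  ZZ (fac 4) (ZZ (fac 5) psi) = psi ->
  ZZ (fac 4) (ZZ (fac 6) psi) = psi ->
  ZZ (fac 7) (ZZ (fac 8) psi) = psi ->
  ZZ (fac 7) (ZZ (fac 9) psi) = psi ->
  XX (fac 1) (XX (fac 2) (XX (fac 3) (XX (fac 4) (XX (fac 5) (XX (fac 6) psi))))) = psi ->
  XX (fac 1) (XX (fac 2) (XX (fac 3) (XX (fac 7) (XX (fac 8) (XX (fac 9) psi))))) = psi ->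
  XX (fac 4) (XX (fac 5) (XX (fac 6) (XX (fac 7) (XX (fac 8) (XX (fac 9) psi))))) = psi ->
  (* (iii) *)
  (forall k : 'I_9, k \in [:: fac 2; fac 3; fac 5; fac 6; fac 8; fac 9] ->
     X k *m X k = 1%:M /\ Z k *m Z k = 1%:M) ->
  forall k : 'I_9,
    XX k (XX k psi) = psi /\ ZZ k (ZZ k psi) = psi /\
    XX k (ZZ k psi) + ZZ k (XX k psi) = 0.
Proof.
move=> herm XX ZZ Ai H12 H13 H45 H46 H78 H79 H7 H8 H9 Sq.
have sXX : forall (k l : 'I_9) (v : vec C d dE), (l < k)%N -> XX k (XX l v) = XX l (XX k v).
  by move=> k l v H; exact: ext_swap.
have sZZ : forall (k l : 'I_9) (v : vec C d dE), (l < k)%N -> ZZ k (ZZ l v) = ZZ l (ZZ k v).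
  by move=> k l v H; exact: ext_swap.
have sZX : forall (k l : 'I_9) (v : vec C d dE), k != l -> ZZ k (XX l v) = XX l (ZZ k v).
  by move=> k l v H; exact: ext_swapN.
have sXZ : forall (k l : 'I_9) (v : vec C d dE), k != l -> XX k (ZZ l v) = ZZ l (XX k v).
  by move=> k l v H; exact: ext_swapN.
have oXX : forall (k : 'I_9) (v : vec C d dE), XX k (- v) = - XX k v by move=> k v; exact: ext_opp.
have oZZ : forall (k : 'I_9) (v : vec C d dE), ZZ k (- v) = - ZZ k v by move=> k v; exact: ext_opp.
have xxA : forall k : 'I_9, k \in [:: fac 2; fac 3; fac 5; fac 6; fac 8; fac 9] ->
   forall v : vec C d dE, XX k (XX k v) = v by move=> k /Sq [h _] v; exact: sq_ext.
have zzA : forall k : 'I_9, k \in [:: fac 2; fac 3; fac 5; fac 6; fac 8; fac 9] ->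
   forall v : vec C d dE, ZZ k (ZZ k v) = v by move=> k /Sq [_ h] v; exact: sq_ext.
have antB : forall k, k \in [:: fac 1; fac 4; fac 7] ->
   forall v : vec C d dE, ZZ k (XX k v) = - XX k (ZZ k v) by move=> k /Ai h v; exact: anti_ext.
have xx2 := xxA (fac 2) (ltac:(by rewrite !inE eqxx ?orbT)).
have xx3 := xxA (fac 3) (ltac:(by rewrite !inE eqxx ?orbT)).
have xx5 := xxA (fac 5) (ltac:(by rewrite !inE eqxx ?orbT)).
have xx6 := xxA (fac 6) (ltac:(by rewrite !inE eqxx ?orbT)).
have xx8 := xxA (fac 8) (ltac:(by rewrite !inE eqxx ?orbT)).
have xx9 := xxA (fac 9) (ltac:(by rewrite !inE eqxx ?orbT)).
have zz2 := zzA (fac 2) (ltac:(by rewrite !inE eqxx ?orbT)).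
have zz3 := zzA (fac 3) (ltac:(by rewrite !inE eqxx ?orbT)).
have zz5 := zzA (fac 5) (ltac:(by rewrite !inE eqxx ?orbT)).
have zz6 := zzA (fac 6) (ltac:(by rewrite !inE eqxx ?orbT)).
have zz8 := zzA (fac 8) (ltac:(by rewrite !inE eqxx ?orbT)).
have zz9 := zzA (fac 9) (ltac:(by rewrite !inE eqxx ?orbT)).
have ant1 := antB (fac 1) (ltac:(by rewrite !inE eqxx ?orbT)).
have ant4 := antB (fac 4) (ltac:(by rewrite !inE eqxx ?orbT)).
have ant7 := antB (fac 7) (ltac:(by rewrite !inE eqxx ?orbT)).
have zeq2 : ZZ (fac 2) psi = ZZ (fac 1) psi.
  by move: (congr1 (ZZ (fac 2)) H12); sortI XX ZZ sXX sZZ; rewrite zz2 => ->.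
have zeq3 : ZZ (fac 3) psi = ZZ (fac 1) psi.
  by move: (congr1 (ZZ (fac 3)) H13); sortI XX ZZ sXX sZZ; rewrite zz3 => ->.
have zeq5 : ZZ (fac 5) psi = ZZ (fac 4) psi.
  by move: (congr1 (ZZ (fac 5)) H45); sortI XX ZZ sXX sZZ; rewrite zz5 => ->.
have zeq6 : ZZ (fac 6) psi = ZZ (fac 4) psi.
  by move: (congr1 (ZZ (fac 6)) H46); sortI XX ZZ sXX sZZ; rewrite zz6 => ->.
have zeq8 : ZZ (fac 8) psi = ZZ (fac 7) psi.
  by move: (congr1 (ZZ (fac 8)) H78); sortI XX ZZ sXX sZZ; rewrite zz8 => ->.
have zeq9 : ZZ (fac 9) psi = ZZ (fac 7) psi.
  by move: (congr1 (ZZ (fac 9)) H79); sortI XX ZZ sXX sZZ; rewrite zz9 => ->.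
have fz1 : ZZ (fac 1) (ZZ (fac 1) psi) = psi by rewrite -zeq2 H12.
have fz4 : ZZ (fac 4) (ZZ (fac 4) psi) = psi by rewrite -zeq5 H45.
have fz7 : ZZ (fac 7) (ZZ (fac 7) psi) = psi by rewrite -zeq8 H78.
have F14 : XX (fac 1) (XX (fac 1) (XX (fac 4) (XX (fac 4) psi))) = psi.
  have E := H7; rewrite -[psi in XX (fac 6) psi]H7 in E.
  move: E; sortI XX ZZ sXX sZZ; rewrite ?xx2 ?xx3 ?xx5 ?xx6 ?xx8 ?xx9.
  by move=> E; exact E.
have F17 : XX (fac 1) (XX (fac 1) (XX (fac 7) (XX (fac 7) psi))) = psi.
  have E := H8; rewrite -[psi in XX (fac 9) psi]H8 in E.
  move: E; sortI XX ZZ sXX sZZ; rewrite ?xx2 ?xx3 ?xx5 ?xx6 ?xx8 ?xx9.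
  by move=> E; exact E.
have F47 : XX (fac 4) (XX (fac 4) (XX (fac 7) (XX (fac 7) psi))) = psi.
  have E := H9; rewrite -[psi in XX (fac 9) psi]H9 in E.
  move: E; sortI XX ZZ sXX sZZ; rewrite ?xx2 ?xx3 ?xx5 ?xx6 ?xx8 ?xx9.
  by move=> E; exact E.
have G1 : XX (fac 1) (XX (fac 1) (XX (fac 4) (XX (fac 4) (XX (fac 7) (XX (fac 7) psi)))))
    = XX (fac 1) (XX (fac 1) psi) by rewrite F47.
have P17 : XX (fac 1) (XX (fac 1) psi) = XX (fac 7) (XX (fac 7) psi).
  have G7 : XX (fac 7) (XX (fac 7) (XX (fac 1) (XX (fac 1) (XX (fac 4) (XX (fac 4) psi)))))
    = XX (fac 7) (XX (fac 7) psi) by rewrite F14.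
  by rewrite -G7 -G1; sortI XX ZZ sXX sZZ.
have P14 : XX (fac 1) (XX (fac 1) psi) = XX (fac 4) (XX (fac 4) psi).
  have G4 : XX (fac 4) (XX (fac 4) (XX (fac 1) (XX (fac 1) (XX (fac 7) (XX (fac 7) psi)))))
    = XX (fac 4) (XX (fac 4) psi) by rewrite F17.
  by rewrite -G4 -G1; sortI XX ZZ sXX sZZ.
have fx1 : XX (fac 1) (XX (fac 1) psi) = psi.
  have x4 : XX (fac 1) (XX (fac 1) (XX (fac 1) (XX (fac 1) psi))) = psi by rewrite P14 F14.
  exact (@pos_sq _ _ _ _ _ _ (proj1 (herm (fac 1))) x4).
have fx4 : XX (fac 4) (XX (fac 4) psi) = psi.
  have x4 : XX (fac 4) (XX (fac 4) (XX (fac 4) (XX (fac 4) psi))) = psi.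
    by rewrite -P14; sortI XX ZZ sXX sZZ; exact F14.
  exact (@pos_sq _ _ _ _ _ _ (proj1 (herm (fac 4))) x4).
have fx7 : XX (fac 7) (XX (fac 7) psi) = psi.
  have x4 : XX (fac 7) (XX (fac 7) (XX (fac 7) (XX (fac 7) psi))) = psi.
    by rewrite -P17; sortI XX ZZ sXX sZZ; exact F17.
  exact (@pos_sq _ _ _ _ _ _ (proj1 (herm (fac 7))) x4).
have xeq2 : XX (fac 2) psi = XX (fac 1) (XX (fac 3) (XX (fac 4) (XX (fac 5) (XX (fac 6) (psi))))).
  by move: (congr1 (XX (fac 2)) H7); sortI XX ZZ sXX sZZ; rewrite xx2 => ->.
have fa2 : XX (fac 2) (ZZ (fac 2) psi) + ZZ (fac 2) (XX (fac 2) psi) = 0.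
  rewrite zeq2; zout XX ZZ sXZ; rewrite !xeq2; nf XX ZZ sZX oXX oZZ ant1 ant4 ant7.
  by rewrite zeq2 addNr.
have xeq3 : XX (fac 3) psi = XX (fac 1) (XX (fac 2) (XX (fac 4) (XX (fac 5) (XX (fac 6) (psi))))).
  by move: (congr1 (XX (fac 3)) H7); sortI XX ZZ sXX sZZ; rewrite xx3 => ->.
have fa3 : XX (fac 3) (ZZ (fac 3) psi) + ZZ (fac 3) (XX (fac 3) psi) = 0.
  rewrite zeq3; zout XX ZZ sXZ; rewrite !xeq3; nf XX ZZ sZX oXX oZZ ant1 ant4 ant7.
  by rewrite zeq3 addNr.
have xeq5 : XX (fac 5) psi = XX (fac 1) (XX (fac 2) (XX (fac 3) (XX (fac 4) (XX (fac 6) (psi))))).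
  by move: (congr1 (XX (fac 5)) H7); sortI XX ZZ sXX sZZ; rewrite xx5 => ->.
have fa5 : XX (fac 5) (ZZ (fac 5) psi) + ZZ (fac 5) (XX (fac 5) psi) = 0.
  rewrite zeq5; zout XX ZZ sXZ; rewrite !xeq5; nf XX ZZ sZX oXX oZZ ant1 ant4 ant7.
  by rewrite zeq5 addNr.
have xeq6 : XX (fac 6) psi = XX (fac 1) (XX (fac 2) (XX (fac 3) (XX (fac 4) (XX (fac 5) (psi))))).
  by move: (congr1 (XX (fac 6)) H7); sortI XX ZZ sXX sZZ; rewrite xx6 => ->.
have fa6 : XX (fac 6) (ZZ (fac 6) psi) + ZZ (fac 6) (XX (fac 6) psi) = 0.
  rewrite zeq6; zout XX ZZ sXZ; rewrite !xeq6; nf XX ZZ sZX oXX oZZ ant1 ant4 ant7.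
  by rewrite zeq6 addNr.
have xeq8 : XX (fac 8) psi = XX (fac 1) (XX (fac 2) (XX (fac 3) (XX (fac 7) (XX (fac 9) (psi))))).
  by move: (congr1 (XX (fac 8)) H8); sortI XX ZZ sXX sZZ; rewrite xx8 => ->.
have fa8 : XX (fac 8) (ZZ (fac 8) psi) + ZZ (fac 8) (XX (fac 8) psi) = 0.
  rewrite zeq8; zout XX ZZ sXZ; rewrite !xeq8; nf XX ZZ sZX oXX oZZ ant1 ant4 ant7.
  by rewrite zeq8 addNr.
have xeq9 : XX (fac 9) psi = XX (fac 1) (XX (fac 2) (XX (fac 3) (XX (fac 7) (XX (fac 8) (psi))))).
  by move: (congr1 (XX (fac 9)) H8); sortI XX ZZ sXX sZZ; rewrite xx9 => ->.
have fa9 : XX (fac 9) (ZZ (fac 9) psi) + ZZ (fac 9) (XX (fac 9) psi) = 0.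
  rewrite zeq9; zout XX ZZ sXZ; rewrite !xeq9; nf XX ZZ sZX oXX oZZ ant1 ant4 ant7.
  by rewrite zeq9 addNr.
have fa1 : XX (fac 1) (ZZ (fac 1) psi) + ZZ (fac 1) (XX (fac 1) psi) = 0 by rewrite ant1 addrN.
have fa4 : XX (fac 4) (ZZ (fac 4) psi) + ZZ (fac 4) (XX (fac 4) psi) = 0 by rewrite ant4 addrN.
have fa7 : XX (fac 7) (ZZ (fac 7) psi) + ZZ (fac 7) (XX (fac 7) psi) = 0 by rewrite ant7 addrN.
move=> k; have -> : k = fac (val k).+1 by rewrite /fac /= inord_val.
case: k => m Hm /=.
case: m Hm => [|[|[|[|[|[|[|[|[|m]]]]]]]]] Hm //.
Qed.
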